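(* Fix the setup in the context (system data $f,g$, state constraint set $\mathcal X$, gain $\mathbf K$, matrices $Q,P$, constant $\gamma$, disturbance level $\overline w\ge0$). There exist constants $\underline\alpha,\underline\beta\ge0$ such that the following holds. For all $\alpha\ge\underline\alpha$, $\beta\ge\underline\beta$, all $N\in\mathbb{N}$, $T>0$, $\underline t\ge0$ (with $\overline t=\underline t+NT$, $t_k=\underline t+kT$), every dynamically admissible trajectory $\mathbf x_d:[\underline t,\overline t]\to\mathbb{R}^n$ satisfying $\Omega_{\mathbf x_d}(t,\overline w)\subseteq\mathcal X$ for all $t\in[\underline t,\overline t]$, and every collection of points $\overline{\mathbf x}_0,\dots,\overline{\mathbf x}_{N-1}\in\mathcal X$: for every $k\in\{0,\dots,N-1\}$, every $t\in[t_k,t_{k+1})$ and every $\mathbf x\in\Omega_{\mathbf x_d}(t,\overline w)$, $$|k^{\rm fbl}_{\mathbf x_d}(\mathbf x,t)|\le\tfrac12\boldsymbol\sigma_{\mathbf x_d}(t)^\top M_{\alpha,\beta}\boldsymbol\sigma_{\mathbf x_d}(t)+N_{\alpha,\beta}(\overline{\mathbf x}_k)^\top\boldsymbol\sigma_{\mathbf x_d}(t)+\Gamma_{\alpha,\beta}(\overline{\mathbf x}_k),$$ where $\boldsymbol\sigma_{\mathbf x_d}(t)=\big(\|\mathbf x_d(t)-\overline{\mathbf x}_k\|_2,\ |\dot x_d^n(t)-f(\overline{\mathbf x}_k)|\big)^\top$ for $t\in[t_k,t_{k+1})$.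
   Context: System: $\dot{\mathbf x}=\mathbf f(\mathbf x)+\mathbf g(\mathbf x)u+\mathbf w(t)$ with $\mathbf x\in\mathbb{R}^n$, $u\in\mathbb{R}$, $\mathbf f(\mathbf x)=A_0\mathbf x+e_nf(\mathbf x)$, $\mathbf g(\mathbf x)=e_ng(\mathbf x)$, where $A_0=\begin{bmatrix}\mathbf 0&I\\0&\mathbf 0^\top\end{bmatrix}\in\mathbb{R}^{n\times n}$, $e_n$ is the last standard basis vector, and $f,g:\mathbb{R}^n\to\mathbb{R}$ are continuously differentiable with $f(\mathbf 0)=0$, $g(\mathbf x)\ne0$ for all $\mathbf x$. A dynamically admissible trajectory is a piecewise continuously differentiable $\mathbf x_d:[\underline t,\overline t]\to\mathbb{R}^n$ for which there is a piecewise continuous $u_d$ with $\dot{\mathbf x}_d=\mathbf f(\mathbf x_d)+\mathbf g(\mathbf x_d)u_d$ almost everywhere; $\dot x_d^n(t)$ is the $n$-th component of $\dot{\mathbf x}_d(t)$ (at the finitely many nondifferentiability points take the right derivative). $\mathcal X=\{\mathbf x:\mathbf L_j^\top\mathbf x\le\ell_j,\ j=1,\dots,q\}$ is a compact convex polytope with $\mathbf 0$ in its interior. $\mathbf K\in\mathbb{R}^n$ is such that $F=A_0-e_n\mathbf K^\top$ is Hurwitz; $Q\in\mathbb{S}^n_{\succ0}$ and $P\in\mathbb{S}^n_{\succ0}$ is the unique solution of $F^\top P+PF=-Q$; $\gamma=4\lambda_{\max}(P)^3/\lambda_{\min}(Q)^2$; $\overline e=\sqrt{\gamma\overline w^2/\lambda_{\min}(P)}$.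 $\Omega_{\mathbf x_d}(t,\overline w)=\{\mathbf x:(\mathbf x-\mathbf x_d(t))^\top P(\mathbf x-\mathbf x_d(t))\le\gamma\overline w^2\}$. Controller: $k^{\rm fbl}_{\mathbf x_d}(\mathbf x,t)=g(\mathbf x)^{-1}\big(-(f(\mathbf x)-\dot x_d^n(t))-\mathbf K^\top(\mathbf x-\mathbf x_d(t))\big)$. For $\alpha,\beta\ge0$: $M_{\alpha,\beta}=\pi_{\rm PSD}\!\left(\begin{bmatrix}2\alpha\beta&\beta\\\beta&0\end{bmatrix}\right)$, where $\pi_{\rm PSD}$ is the projection of a symmetric matrix onto the positive semidefinite cone (keeping nonnegative eigenvalues, zeroing negative ones); $N_{\alpha,\beta}(\overline{\mathbf x})=\big(2\alpha\beta\overline e+\alpha|g(\overline{\mathbf x})^{-1}|+\beta\|\mathbf K\|_2\overline e,\ |g(\overline{\mathbf x})^{-1}|+\beta\overline e\big)^\top$; $\Gamma_{\alpha,\beta}(\overline{\mathbf x})=\overline e(\beta\overline e+|g(\overline{\mathbf x})^{-1}|)(\alpha+\|\mathbf K\|_2)$. *)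

(* Defs.v *)
From HB Require Import structures.
From mathcomp Require Import all_boot all_order all_algebra.
From mathcomp Require Import all_classical all_reals all_analysis.
Set Implicit Arguments. Unset Strict Implicit. Unset Printing Implicit Defensive.
Import Order.TTheory GRing.Theory Num.Theory.
Import numFieldNormedType.Exports.
Local Open Scope classical_set_scope.
Local Open Scope ring_scope.

Definition norm2 {R : realType} {m : nat} (v : 'cV[R]_m) : R :=
  Num.sqrt (\sum_(i < m) v i 0 ^+ 2).

Definition quad {R : realType} {m : nat} (A : 'M[R]_m) (x : 'cV[R]_m) : R :=
  (x^T *m A *m x) 0 0.

Definition posdef {R : realType} {m : nat} (A : 'M[R]_m) : Prop :=
  A^T = A /\ forall x : 'cV[R]_m, x != 0 -> 0 < quad A x.

Definition lmax {R : realType} {m : nat} (A : 'M[R]_m) : R :=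
  sup [set a : R | eigenvalue A a].
Definition lmin {R : realType} {m : nat} (A : 'M[R]_m) : R :=
  inf [set a : R | eigenvalue A a].

(* Hurwitz: every (complex) eigenvalue a + i b of the real matrix F has a < 0.
   The complex eigen-equation F (u + i v) = (a + i b)(u + i v), (u,v) <> 0,
   is written out in real coordinates. *)
Definition hurwitz {R : realType} {m : nat} (F : 'M[R]_m) : Prop :=
  forall (a b : R) (u v : 'cV[R]_m), (u != 0 \/ v != 0) ->
    F *m u = a *: u - b *: v -> F *m v = b *: u + a *: v -> a < 0.

Definition piPSD {R : realType} {m : nat} (A : 'M[R]_m) : 'M[R]_m :=
  xget 0 [set X : 'M[R]_m | exists (U : 'M[R]_m) (d : 'rV[R]_m),
    [/\ U *m U^T = 1%:M, A = U *m diag_mx d *m U^T &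
        X = U *m diag_mx (\row_i Num.max (d 0 i) 0) *m U^T]].

Definition vec2 {R : realType} (a b : R) : 'cV[R]_2 :=
  \col_(i < 2) (if (i == 0 :> nat) then a else b).

Definition A0 {R : realType} (n : nat) : 'M[R]_n.+1 :=
  \matrix_(i, j) ((j : nat) == i.+1)%:R.

Definition en {R : realType} (n : nat) : 'cV[R]_n.+1 := delta_mx ord_max 0.

Definition fvec {R : realType} {n : nat} (f : 'cV[R]_n.+1 -> R) (x : 'cV[R]_n.+1)
  : 'cV[R]_n.+1 := A0 n *m x + f x *: en n.
Definition gvec {R : realType} {n : nat} (g : 'cV[R]_n.+1 -> R) (x : 'cV[R]_n.+1)
  : 'cV[R]_n.+1 := g x *: en n.

Definition C1 {R : realType} {m : nat} (h : 'cV[R]_m -> R) : Prop :=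
  (forall x, differentiable h x) /\ (forall v : 'cV[R]_m, continuous (fun x => 'd h x v)).

Definition polytope {R : realType} {m q : nat} (L : 'I_q -> 'cV[R]_m) (ell : 'I_q -> R)
  : set 'cV[R]_m := [set x | forall j, ((L j)^T *m x) 0 0 <= ell j].

Definition is_partition {R : realType} (a b : R) (s : seq R) : Prop :=
  [/\ (1 < size s)%N, head 0 s = a, last 0 s = b & sorted <%R s].

(* piecewise continuous on [a,b]: on each open piece the function is continuous
   with finite one-sided limits at the ends (= coincides there with a function
   continuous on the closed piece) *)
Definition piecewise_continuous {R : realType} (a b : R) (u : R -> R) : Prop :=
  exists s, is_partition a b s /\ forall i, (i.+1 < size s)%N ->
    exists U : R -> R, {within `[nth 0 s i, nth 0 s i.+1], continuous U} /\
      forall t, nth 0 s i < t < nth 0 s i.+1 -> u t = U t.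

Definition piecewise_C1 {R : realType} {m : nat} (a b : R) (x : R -> 'cV[R]_m) : Prop :=
  {within `[a, b], continuous x} /\
  exists s, is_partition a b s /\ forall i, (i.+1 < size s)%N ->
    (forall t, nth 0 s i < t < nth 0 s i.+1 -> derivable x t 1) /\
    exists D : R -> 'cV[R]_m, {within `[nth 0 s i, nth 0 s i.+1], continuous D} /\
      forall t, nth 0 s i < t < nth 0 s i.+1 -> derive1 x t = D t.

Definition dyn_admissible {R : realType} {n : nat} (f g : 'cV[R]_n.+1 -> R)
  (a b : R) (xd : R -> 'cV[R]_n.+1) : Prop :=
  piecewise_C1 a b xd /\
  exists ud : R -> R, piecewise_continuous a b ud /\
    {ae (@lebesgue_measure R), forall t, t \in `[a, b] ->
       derivable xd t 1 /\ derive1 xd t = fvec f (xd t) + ud t *: gvec g (xd t)}.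

Definition rderiv {R : realType} (h : R -> R) (t : R) : R :=
  lim ((h (t + s) - h t) / s @[s --> 0^'+]).

(* \dot x_d^n(t): n-th component of the derivative (right derivative, which
   coincides with the derivative wherever x_d is differentiable) *)
Definition xd_dot_n {R : realType} {n : nat} (xd : R -> 'cV[R]_n.+1) (t : R) : R :=
  rderiv (fun s => xd s ord_max 0) t.

Definition gamma {R : realType} {m : nat} (P Q : 'M[R]_m) : R :=
  4 * lmax P ^+ 3 / lmin Q ^+ 2.

Definition ebar {R : realType} {m : nat} (P Q : 'M[R]_m) (wbar : R) : R :=
  Num.sqrt (gamma P Q * wbar ^+ 2 / lmin P).

Definition Omega {R : realType} {m : nat} (P Q : 'M[R]_m) (xd : R -> 'cV[R]_m)
  (t wbar : R) : set 'cV[R]_m :=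
  [set x | quad P (x - xd t) <= gamma P Q * wbar ^+ 2].

Definition kfbl {R : realType} {n : nat} (f g : 'cV[R]_n.+1 -> R) (K : 'cV[R]_n.+1)
  (xd : R -> 'cV[R]_n.+1) (x : 'cV[R]_n.+1) (t : R) : R :=
  (g x)^-1 * (- (f x - xd_dot_n xd t) - (K^T *m (x - xd t)) 0 0).

Definition Mab {R : realType} (alpha beta : R) : 'M[R]_2 :=
  piPSD (\matrix_(i < 2, j < 2)
           (if (i + j == 0)%N then 2 * alpha * beta
            else if (i + j == 1)%N then beta else 0)).

Definition Nab {R : realType} {m : nat} (g : 'cV[R]_m -> R) (K : 'cV[R]_m)
  (e alpha beta : R) (xb : 'cV[R]_m) : 'cV[R]_2 :=
  vec2 (2 * alpha * beta * e + alpha * `|(g xb)^-1| + beta * norm2 K * e)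
       (`|(g xb)^-1| + beta * e).

Definition Gammaab {R : realType} {m : nat} (g : 'cV[R]_m -> R) (K : 'cV[R]_m)
  (e alpha beta : R) (xb : 'cV[R]_m) : R :=
  e * (beta * e + `|(g xb)^-1|) * (alpha + norm2 K).

Definition sigma {R : realType} {n : nat} (f : 'cV[R]_n.+1 -> R)
  (xd : R -> 'cV[R]_n.+1) (xb : 'cV[R]_n.+1) (t : R) : 'cV[R]_2 :=
  vec2 (norm2 (xd t - xb)) `|xd_dot_n xd t - f xb|.

(* Main.v *)
Require Import Defs.
From HB Require Import structures.
From mathcomp Require Import all_boot all_order all_algebra.
From mathcomp Require Import all_classical all_reals all_analysis.
From mathcomp Require Import ring lra.
Import Order.TTheory GRing.Theory Num.Theory.
Import numFieldNormedType.Exports.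
Local Open Scope classical_set_scope.
Local Open Scope ring_scope.


Section N2.
Context {R : realType} {m : nat}.
Implicit Types u v a b : 'cV[R]_m.

Lemma sumsq_ge0 v : 0 <= \sum_i v i 0 ^+ 2.
Proof. by apply: sumr_ge0 => i _; exact: sqr_ge0. Qed.

Lemma norm2_ge0 v : 0 <= norm2 v.
Proof. exact: sqrtr_ge0. Qed.

Lemma norm2_sq v : norm2 v ^+ 2 = \sum_i v i 0 ^+ 2.
Proof. by rewrite /norm2 sqr_sqrtr // sumsq_ge0. Qed.

Lemma coord_le_norm2 v i : `|v i 0| <= norm2 v.
Proof.
rewrite -(sqrtr_sqr (v i 0)) /norm2 ler_sqrt ?sumsq_ge0 //.
by rewrite (bigD1 i) //= lerDl; apply: sumr_ge0 => j _; exact: sqr_ge0.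
Qed.

Lemma lagrange a b :
  \sum_i \sum_j (a i 0 * b j 0 - a j 0 * b i 0) ^+ 2 =
  2 * ((\sum_i a i 0 ^+ 2) * (\sum_i b i 0 ^+ 2) - (\sum_i a i 0 * b i 0) ^+ 2).
Proof.
set A := \sum_i a i 0 ^+ 2; set B := \sum_i b i 0 ^+ 2; set C := \sum_i a i 0 * b i 0.
have inner : forall i, \sum_j (a i 0 * b j 0 - a j 0 * b i 0) ^+ 2 =
   a i 0 ^+ 2 * B + b i 0 ^+ 2 * A - 2 * (a i 0 * b i 0) * C.
  move=> i; rewrite /A /B /C !mulr_sumr -big_split -sumrB /=.
  by apply: eq_bigr => j _; ring.
rewrite (eq_bigr _ (fun i _ => inner i)) /=.
rewrite !big_split /= sumrN.
have e1 : \sum_(i < m) a i 0 ^+ 2 * B = A * B by rewrite /A mulr_suml.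
have e2 : \sum_(i < m) b i 0 ^+ 2 * A = B * A by rewrite /B mulr_suml.
have e3 : \sum_(i < m) 2 * (a i 0 * b i 0) * C = 2 * C * C.
  by rewrite -mulr_suml -mulr_sumr.
rewrite e1 e2 e3; ring.
Qed.

Lemma CS_sq a b : (\sum_i a i 0 * b i 0) ^+ 2 <= (\sum_i a i 0 ^+ 2) * (\sum_i b i 0 ^+ 2).
Proof.
have H := lagrange a b.
have : 0 <= \sum_i \sum_j (a i 0 * b j 0 - a j 0 * b i 0) ^+ 2.
  by apply: sumr_ge0 => i _; apply: sumr_ge0 => j _; exact: sqr_ge0.
rewrite H pmulr_rge0 // subr_ge0 //.
Qed.

Lemma CS a b : `|\sum_i a i 0 * b i 0| <= norm2 a * norm2 b.
Proof.
rewrite /norm2 -sqrtrM ?sumsq_ge0 // -sqrtr_sqr ler_sqrt; last first.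
  by apply: mulr_ge0; exact: sumsq_ge0.
exact: CS_sq.
Qed.

Lemma norm2_triangle u v : norm2 (u + v) <= norm2 u + norm2 v.
Proof.
have h0 : 0 <= norm2 u + norm2 v by rewrite addr_ge0 ?norm2_ge0.
rewrite -(ler_pXn2r (n:=2)) ?nnegrE ?norm2_ge0 //.
rewrite norm2_sq.
have -> : \sum_i (u + v) i 0 ^+ 2 = \sum_i u i 0 ^+ 2 + \sum_i v i 0 ^+ 2 + 2 * \sum_i u i 0 * v i 0.
  rewrite mulr_sumr -!big_split /=; apply: eq_bigr => i _; rewrite mxE; ring.
have := CS u v; rewrite -!norm2_sq => hc.
have hc' := ler_norm (\sum_i u i 0 * v i 0).
nra.
Qed.

Lemma norm2N v : norm2 (- v) = norm2 v.
Proof. by rewrite /norm2; congr Num.sqrt; apply: eq_bigr => i _; rewrite mxE sqrrN. Qed.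

Lemma norm2_sym u v : norm2 (u - v) = norm2 (v - u).
Proof. by rewrite -norm2N opprB. Qed.

Lemma dot_norm2 a b : `|(a^T *m b) 0 0| <= norm2 a * norm2 b.
Proof.
rewrite mxE; under eq_bigr do rewrite mxE; exact: CS.
Qed.
End N2.

Section PSD.
Context {R : realType} {m : nat}.

Lemma quad_UDU (U : 'M[R]_m) (d : 'rV[R]_m) s :
  quad (U *m diag_mx d *m U^T) s = \sum_i d 0 i * ((U^T *m s) i 0) ^+ 2.
Proof.
rewrite /quad -!mulmxA mulmxA -[s^T *m U]trmxK trmx_mul trmxK.
set w := U^T *m s.
rewrite mxE; apply: eq_bigr => i _.
rewrite mul_diag_mx !mxE; ring.
Qed.

Lemma quad_piPSD_ge (A : 'M[R]_m) s :
  (exists (U : 'M[R]_m) (d : 'rV[R]_m), A = U *m diag_mx d *m U^T /\ U *m U^T = 1%:M) ->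
  quad A s <= quad (piPSD A) s.
Proof.
move=> [U [d [hA hU]]].
rewrite /piPSD.
set S := [set X : 'M[R]_m | _].
have : S (xget 0 S).
  apply: xgetPex; exists (U *m diag_mx (\row_i Num.max (d 0 i) 0) *m U^T).
  by exists U, d; split.
move=> [U' [d' [_ hA' ->]]].
rewrite hA' !quad_UDU; apply: ler_sum => i _.
apply: ler_wpM2r; first exact: sqr_ge0.
by rewrite mxE le_max lexx.
Qed.
End PSD.

Section Two.
Context {R : realType}.

Definition Amat (a b : R) : 'M[R]_2 :=
  \matrix_(i < 2, j < 2) (if (i + j == 0)%N then a else if (i + j == 1)%N then b else 0).

Lemma decomp2 (a b : R) : 0 < b ->
  exists (U : 'M[R]_2) (d : 'rV[R]_2), Amat a b = U *m diag_mx d *m U^T /\ U *m U^T = 1%:M.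
Proof.
move=> b0.
set r0 := Num.sqrt (a ^+ 2 + 4 * b ^+ 2).
have hr0 : r0 ^+ 2 = a ^+ 2 + 4 * b ^+ 2.
  by rewrite sqr_sqrtr // addr_ge0 ?sqr_ge0 // mulr_ge0 ?sqr_ge0.
set l1 := (a + r0) / 2.
set l2 := a - l1.
have hl1 : l1 ^+ 2 = a * l1 + b ^+ 2.
  have E : l1 ^+ 2 - (a * l1 + b ^+ 2) = (r0 ^+ 2 - (a ^+ 2 + 4 * b ^+ 2)) / 4.
    by rewrite /l1; field.
  by apply/eqP; rewrite -subr_eq0 E hr0 subrr mul0r.
set N := l1 ^+ 2 + b ^+ 2.
have N0 : 0 < N by rewrite /N ltr_wpDl ?sqr_ge0 // exprn_gt0.
set t := (Num.sqrt N)^-1.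
have htN : t ^+ 2 * N = 1.
  by rewrite /t exprVn sqr_sqrtr ?ltW // mulVf // gt_eqF.
set c := l1 * t. set s := b * t.
exists (\matrix_(i < 2, j < 2) (if (i == 0 :> nat) then (if (j == 0 :> nat) then c else - s)
          else (if (j == 0 :> nat) then s else c))).
exists (\row_(i < 2) (if (i == 0 :> nat) then l1 else l2)).
have k1 : l1 ^+ 3 + b ^+ 2 * l2 = a * N.
  have -> : l1 ^+ 3 + b ^+ 2 * l2 = a * N + l1 * (l1 ^+ 2 - (a * l1 + b ^+ 2)) by rewrite /l2 /N; ring.
  by rewrite hl1 subrr mulr0 addr0.
have k2 : l1 * b * (l1 - l2) = b * N.
  have -> : l1 * b * (l1 - l2) = b * N + b * (l1 ^+ 2 - (a * l1 + b ^+ 2)) by rewrite /l2 /N; ring.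
  by rewrite hl1 subrr mulr0 addr0.
have k3 : b ^+ 2 * l1 + l1 ^+ 2 * l2 = 0.
  have -> : b ^+ 2 * l1 + l1 ^+ 2 * l2 = - l1 * (l1 ^+ 2 - (a * l1 + b ^+ 2)) by rewrite /l2; ring.
  by rewrite hl1 subrr mulr0.
split; apply/matrixP => i j; rewrite !mxE !big_ord_recr big_ord0 /= !mxE;
  rewrite ?big_ord_recr ?big_ord0 /= ?mxE /=;
  case: i => [[|[|//]] Hi]; case: j => [[|[|//]] Hj] /=.
all: rewrite ?mulr1n ?mulr0n /c /s.
- have -> : (0 + (0 + l1 * t * l1 + - (b * t) * 0) * (l1 * t) +
     (0 + l1 * t * 0 + - (b * t) * l2) * - (b * t)) = t ^+ 2 * (l1 ^+ 3 + b ^+ 2 * l2) by ring.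
  by rewrite k1 mulrCA htN mulr1.
- have -> : (0 + (0 + l1 * t * l1 + - (b * t) * 0) * (b * t) +
     (0 + l1 * t * 0 + - (b * t) * l2) * (l1 * t)) = t ^+ 2 * (l1 * b * (l1 - l2)) by ring.
  by rewrite k2 mulrCA htN mulr1.
- have -> : (0 + (0 + b * t * l1 + l1 * t * 0) * (l1 * t) +
     (0 + b * t * 0 + l1 * t * l2) * - (b * t)) = t ^+ 2 * (l1 * b * (l1 - l2)) by ring.
  by rewrite k2 mulrCA htN mulr1.
- have -> : (0 + (0 + b * t * l1 + l1 * t * 0) * (b * t) +
     (0 + b * t * 0 + l1 * t * l2) * (l1 * t)) = t ^+ 2 * (b ^+ 2 * l1 + l1 ^+ 2 * l2) by ring.
  by rewrite k3 mulr0.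
- by rewrite -htN /N; ring.
- ring.
- ring.
- by rewrite -htN /N; ring.
Qed.
End Two.

Section Q.
Context {R : realType} {m : nat}.
Implicit Types (x y v : 'cV[R]_m) (B : 'M[R]_m).

Lemma m11T (M : 'M[R]_1) : M^T 0 0 = M 0 0.
Proof. by rewrite mxE. Qed.

Lemma trD p r (a b : 'M[R]_(p, r)) : (a + b)^T = a^T + b^T.
Proof. by apply/matrixP => i j; rewrite !mxE. Qed.

Lemma trZ p r (c : R) (a : 'M[R]_(p, r)) : (c *: a)^T = c *: a^T.
Proof. by apply/matrixP => i j; rewrite !mxE. Qed.

Lemma bilin_sym B x y : B^T = B -> (x^T *m B *m y) 0 0 = (y^T *m B *m x) 0 0.
Proof.
by move=> hB; rewrite -m11T !trmx_mul trmxK hB mulmxA.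
Qed.

Lemma quadD B x y : B^T = B ->
  quad B (x + y) = quad B x + 2 * (y^T *m B *m x) 0 0 + quad B y.
Proof.
move=> hB; rewrite /quad trD !mulmxDl !mulmxDr.
have addE : forall (M N : 'M[R]_1), (M + N) 0 0 = M 0 0 + N 0 0 by move=> *; rewrite mxE.
rewrite !addE (bilin_sym _ x y hB); ring.
Qed.

Lemma quadZ B c x : quad B (c *: x) = c ^+ 2 * quad B x.
Proof.
by rewrite /quad trZ -!scalemxAl -scalemxAr !mxE mulrA expr2.
Qed.

Lemma quad0 B : quad B 0 = 0.
Proof. by rewrite /quad mulmx0 mxE. Qed.

Lemma quad_scalar (c : R) x : quad c%:M x = c * \sum_i x i 0 ^+ 2.
Proof.
rewrite /quad mul_mx_scalar -scalemxAl !mxE; congr (_ * _).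
by apply: eq_bigr => i _; rewrite !mxE expr2.
Qed.

Lemma quadB B (c : R) x : quad (B - c%:M) x = quad B x - c * \sum_i x i 0 ^+ 2.
Proof.
rewrite /quad mulmxBr mulmxBl mxE; congr (_ + _); rewrite mxE; congr (- _); exact: quad_scalar.
Qed.

Lemma sumsq_eq0 x : \sum_i x i 0 ^+ 2 = 0 -> x = 0.
Proof.
move=> h; apply/matrixP => i j; rewrite ord1 mxE.
have H0 := psumr_eq0P (P := predT) (fun i _ => sqr_ge0 (x i 0)) h. have := H0 i isT.
by move/eqP; rewrite sqrf_eq0 => /eqP.
Qed.

Lemma quad_self B x : (x^T *m (B *m x)) 0 0 = quad B x.
Proof. by rewrite /quad mulmxA. Qed.

Lemma PSD_null B x : B^T = B -> (forall v, 0 <= quad B v) -> quad B x = 0 -> B *m x = 0.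
Proof.
move=> hB hpos h0.
set w := B *m x.
set W := (w^T *m B *m x) 0 0.
have hW : W = \sum_i w i 0 ^+ 2.
  rewrite /W -mulmxA -/w mxE; apply: eq_bigr => i _; rewrite !mxE expr2 //.
set q := quad B w.
have q0 : 0 <= q by exact: hpos.
set tau := - (W / (q + 1)).
have := hpos (x + tau *: w).
rewrite quadD // h0 quadZ -/q.
have -> : ((tau *: w)^T *m B *m x) 0 0 = tau * W.
  by rewrite trZ -!scalemxAl mxE.
have E : 0 + 2 * (tau * W) + tau ^+ 2 * q = - (W ^+ 2 * (q + 2)) / (q + 1) ^+ 2.
  have q1 : 0 < q + 1 by lra.
  by rewrite /tau; field; rewrite gt_eqF.
have q1 : 0 < q + 1 by lra.
rewrite E pmulr_lge0 ?invr_gt0 ?exprn_gt0 // oppr_ge0 => hle.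
have W2 : W ^+ 2 * (q + 2) = 0.
  apply/eqP; rewrite eq_le hle mulr_ge0 ?sqr_ge0 //; lra.
have : W = 0.
  move: W2 => /eqP; rewrite mulf_eq0 sqrf_eq0 => /orP [/eqP //|].
  by rewrite gt_eqF //; lra.
by rewrite hW => /sumsq_eq0.
Qed.
End Q.

Section Ray.
Context {R : realType} {m : nat}.

Definition sqr (u : 'rV[R]_m.+1) := \sum_i u 0 i ^+ 2.

Lemma sqr_cont : continuous sqr.
Proof.
rewrite /sqr; apply: (continuous_big add_continuous) => i _ x.
rewrite /continuous_at.
under eq_fun do rewrite expr2.
rewrite expr2; apply: continuousM; exact: coord_continuous.
Qed.

Lemma quadE (A : 'M[R]_m.+1) (x : 'cV[R]_m.+1) :
  quad A x = \sum_j \sum_i x i 0 * A i j * x j 0.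
Proof.
rewrite /quad mxE; apply: eq_bigr => j _; rewrite mxE mulr_suml.
by apply: eq_bigr => i _; rewrite mxE.
Qed.

Lemma rho_cont (A : 'M[R]_m.+1) : continuous (fun u : 'rV[R]_m.+1 => quad A u^T).
Proof.
have -> : (fun u : 'rV[R]_m.+1 => quad A u^T) =
   (fun u => \sum_j \sum_i u 0 i * A i j * u 0 j).
  by apply: funext => u; rewrite quadE; apply: eq_bigr => j _; apply: eq_bigr => i _; rewrite !mxE.
apply: (continuous_big add_continuous) => j _.
apply: (continuous_big add_continuous) => i _ x.
apply: (continuousM (s := fun u : 'rV[R]_m.+1 => u 0 i * A i j) (t := fun u => u 0 j)); last exact: coord_continuous.
apply: (continuousM (s := fun u : 'rV[R]_m.+1 => u 0 i) (t := fun _ => A i j)); first exact: coord_continuous.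
exact: cst_continuous.
Qed.

Definition Sph := sqr @^-1` [set (1:R)].

Lemma Sph_compact : compact Sph.
Proof.
have hb : bounded_near (fun x : 'rV[R]_m.+1 => x) (globally Sph).
  rewrite /bounded_near; near=> M => u Su /=.
  rewrite [`|u|]/Num.norm /= mx_normrE.
  apply: bigmax_le => [|[i j] _] /=.
    by near: M; apply: nbhs_pinfty_ge.
  have hM : 1 <= M by near: M; apply: nbhs_pinfty_ge.
  apply: le_trans hM.
  rewrite ord1 -(sqrtr_sqr (u 0 j)) -sqrtr1 ler_sqrt //.
  rewrite /Sph /= /sqr in Su; rewrite -Su (bigD1 j) //= lerDl.
  by apply: sumr_ge0 => k _; exact: sqr_ge0.
apply: bounded_closed_compact; first exact: hb.
apply: preimage_closed; first by move=> x _; exact: sqr_cont.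
exact: closed_eq.
Unshelve. all: end_near.
Qed.

Lemma sumsq_pos (v : 'cV[R]_m.+1) : v != 0 -> 0 < \sum_i v i 0 ^+ 2.
Proof.
move=> v0; rewrite lt_neqAle sumr_ge0 ?andbT; last by move=> i _; exact: sqr_ge0.
by apply/eqP => /esym /sumsq_eq0 h; rewrite h eqxx in v0.
Qed.

Lemma sqr_tr (u : 'rV[R]_m.+1) : \sum_i u^T i 0 ^+ 2 = sqr u.
Proof. by apply: eq_bigr => i _; rewrite mxE. Qed.

Lemma rayleigh (P : 'M[R]_m.+1) : posdef P ->
  exists mu, [/\ 0 < mu, eigenvalue P mu,
    (forall v : 'cV[R]_m.+1, mu * \sum_i v i 0 ^+ 2 <= quad P v) &
    (forall a, eigenvalue P a -> mu <= a)].
Proof.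
move=> [PT Ppos].
have ne : Sph !=set0.
  exists (\row_j (j == 0)%:R); rewrite /Sph /= /sqr (bigD1 0) //= mxE eqxx expr1n.
  rewrite big1 ?addr0 // => i /negbTE hi; rewrite mxE hi; exact: expr0n.
have [u0 u0S u0min] := compact_EVT_min ne Sph_compact
   (continuous_subspaceT (rho_cont P)).
have u0S' : sqr u0 = 1 by move: u0S; rewrite inE.
set mu := quad P u0^T.
have u0nz : u0^T != 0.
  apply/eqP => h; move: u0S'; rewrite -sqr_tr h.
  under eq_bigr do rewrite mxE expr0n /=.
  by rewrite big1 // => /eqP; rewrite eq_sym oner_eq0.
have mu0 : 0 < mu by exact: Ppos.
have hbound : forall v : 'cV[R]_m.+1, mu * \sum_i v i 0 ^+ 2 <= quad P v.
  move=> v; have [->|vnz] := eqVneq v 0.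
    rewrite quad0; under eq_bigr do rewrite mxE expr0n /=.
    by rewrite big1 // mulr0.
  have k0 := sumsq_pos _ vnz.
  set k := \sum_i v i 0 ^+ 2 in k0 *.
  set s := Num.sqrt k.
  have s0 : 0 < s by rewrite sqrtr_gt0.
  have hs : s ^+ 2 = k by rewrite sqr_sqrtr // ltW.
  have uS : Sph (s^-1 *: v)^T.
    rewrite /Sph /= -sqr_tr trmxK.
    under eq_bigr do rewrite mxE exprMn.
    by rewrite -mulr_sumr -/k exprVn hs mulVf // lt0r_neq0.
  have := u0min _ (mem_set uS); rewrite trmxK quadZ exprVn hs -/mu.
  by rewrite ler_pdivlMl // mulrC.
have hB : (P - mu%:M)^T = P - mu%:M.
  apply/matrixP => i j; rewrite !mxE eq_sym; congr (_ - _); by rewrite -[in RHS]PT mxE.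
have hBpos : forall v, 0 <= quad (P - mu%:M) v.
  by move=> v; rewrite quadB subr_ge0.
have hB0 : quad (P - mu%:M) u0^T = 0.
  by rewrite quadB sqr_tr u0S' mulr1 subrr.
have := PSD_null _ _ hB hBpos hB0.
rewrite mulmxBl mul_scalar_mx => /eqP; rewrite subr_eq0 => /eqP hP.
have eig : eigenvalue P mu.
  apply/eigenvalueP; exists u0.
    by rewrite -[u0]trmxK -[P]PT -trmx_mul hP trZ trmxK.
  by apply: contra u0nz => /eqP ->; rewrite trmx0.
exists mu; split => // a /eigenvalueP [u hu unz].
have hv : P *m u^T = a *: u^T by rewrite -[P]PT -trmx_mul hu trZ.
have vnz : u^T != 0 by apply: contra unz => /eqP h; rewrite -[u]trmxK h trmx0.
have := hbound u^T.
rewrite -quad_self hv -scalemxAr mxE.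
have -> : (u^T^T *m u^T) 0 0 = \sum_i u^T i 0 ^+ 2.
  by rewrite mxE; apply: eq_bigr => i _; rewrite mxE expr2.
by rewrite ler_pM2r // sumsq_pos.
Qed.
End Ray.

Section Lip.
Context {R : realType} {m : nat}.
Local Notation V := 'cV[R]_m.

Lemma seg_derive (h : V -> R) (y w : V) (s : R) :
  differentiable h (y + s *: w) ->
  is_derive s 1 (fun t : R => h (y + t *: w)) ('d h (y + s *: w) w).
Proof.
move=> dh.
set p := y + s *: w.
have Efun : (fun t : R => t^-1 *: (((fun t : R => h (y + t *: w)) \o shift s) (t *: 1)
               - h (y + s *: w))) =
            (fun t : R => t^-1 *: ((h \o shift p) (t *: w) - h p)).
  apply: funext => t /=; congr (_ *: (h _ - _)).
  by rewrite /p [t%:A]mulr1 scalerDl addrCA.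
have hd : derivable (fun t : R => h (y + t *: w)) s 1.
  by rewrite /derivable Efun; exact: diff_derivable.
apply: DeriveDef => //.
by rewrite /derive Efun -/(derive h p w) deriveE.
Qed.

Lemma d_bound (h : V -> R) (X : set V) : C1 h -> compact X -> X !=set0 ->
  exists B, 0 <= B /\ forall p v, X p -> `|'d h p v| <= B * norm2 v.
Proof.
move=> [hd hc] cX X0.
have : forall i : 'I_m, exists Bi : R, 0 <= Bi /\
    forall p, X p -> `|'d h p (delta_mx i 0)| <= Bi.
  move=> i.
  have cont : {within X, continuous (fun p => `|'d h p (delta_mx i 0 : V)|)}.
    apply: continuous_subspaceT => p.
    apply: (continuous_comp (f := fun p => 'd h p (delta_mx i 0 : V)) (g := Num.norm)).
      exact: hc.
    exact: norm_continuous.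
  have [c Xc cmax] := compact_EVT_max X0 cX cont.
  exists `|'d h c (delta_mx i 0 : V)|; split; first exact: normr_ge0.
  move=> p Xp. apply: (cmax p). by rewrite inE.
move=> /fin_all_exists [Bf hBf].
exists (\sum_i Bf i); split.
  by apply: sumr_ge0 => i _; case: (hBf i).
move=> p v Xp.
have -> : 'd h p v = \sum_i v i 0 * 'd h p (delta_mx i 0 : V).
  rewrite {1}[v]matrix_sum_delta linear_sum; apply: eq_bigr => i _.
  by rewrite big_ord1 linearZ.
apply: le_trans (ler_norm_sum _ _ _) _.
rewrite mulr_suml; apply: ler_sum => i _.
rewrite normrM mulrC; apply: ler_pM.
- exact: normr_ge0.
- exact: normr_ge0.
- by case: (hBf i) => _; apply.
- exact: coord_le_norm2.
Qed.

Lemma lipschitz (h : V -> R) (X : set V) : C1 h -> compact X -> X !=set0 ->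
  (forall y z s, X y -> X z -> 0 <= s <= 1 -> X (y + s *: (z - y))) ->
  exists L, 0 <= L /\ forall y z, X y -> X z -> `|h z - h y| <= L * norm2 (z - y).
Proof.
move=> hC cX X0 conv.
have [B [B0 hB]] := d_bound _ _ hC cX X0.
exists B; split => // y z Xy Xz.
set w := z - y.
set phi := fun t : R => h (y + t *: w).
have der : forall t : R, is_derive t (1:R) phi ('d h (y + t *: w) w).
  by move=> t; apply: seg_derive; case: hC.
have cphi : {within `[0, 1], continuous phi}.
  apply: continuous_subspaceT => t.
  have [dv _] := der t.
  apply: differentiable_continuous.
  by apply/derivable1_diffP.
have [c cI hc] := MVT ltr01 (fun t _ => der t) cphi.
have -> : h z - h y = phi 1 - phi 0.
  by rewrite /phi scale1r scale0r addr0 /w; congr (h _ - _); rewrite addrC subrK.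
have -> : phi 1 - phi 0 = 'd h (y + c *: w) w by move: hc; rewrite subr0 mulr1.
apply: hB; apply: conv => //.
by move: cI; rewrite in_itv /= => /andP [c0 c1]; rewrite !ltW.
Qed.
End Lip.


Section Fin.
Context {R : realType}.

Lemma vec2_dot (a b c d : R) : ((vec2 a b)^T *m vec2 c d) 0 0 = a * c + b * d.
Proof. by rewrite mxE !big_ord_recr big_ord0 /= !mxE /= add0r. Qed.

Lemma quad_Mab (al be s1 s2 : R) : 0 < be ->
  2 * al * be * s1 ^+ 2 + 2 * be * s1 * s2 <= quad (Mab al be) (vec2 s1 s2).
Proof.
move=> b0.
have := quad_piPSD_ge _ (vec2 s1 s2) (decomp2 (2 * al * be) be b0).
rewrite /Mab /Amat; apply: le_trans.
rewrite /quad mxE !big_ord_recr big_ord0 /= !mxE !big_ord_recr big_ord0 /= !mxE /= big_ord0.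
by rewrite le_eqVlt; apply/orP; left; apply/eqP; ring.
Qed.

Lemma lmin_prop (n : nat) (P : 'M[R]_n.+1) : posdef P ->
  0 < lmin P /\ forall v : 'cV[R]_n.+1, lmin P * \sum_i v i 0 ^+ 2 <= quad P v.
Proof.
move=> hP; have [mu [mu0 eig hb lb]] := rayleigh _ hP.
have -> : lmin P = mu.
  rewrite /lmin; apply/le_anti/andP; split.
    apply: (ge_inf (E := [set a | eigenvalue P a])) => //.
    by exists mu => a /= ha; exact: lb.
  by apply: lb_le_inf; [exists mu | move=> a /= ha; exact: lb].
by split.
Qed.

Lemma polytope_convex (n q : nat) (L : 'I_q -> 'cV[R]_n) (ell : 'I_q -> R) y z (s : R) :
  polytope L ell y -> polytope L ell z -> 0 <= s <= 1 ->
  polytope L ell (y + s *: (z - y)).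
Proof.
move=> hy hz /andP [s0 s1] j.
have -> : ((L j)^T *m (y + s *: (z - y))) 0 0 =
    (1 - s) * ((L j)^T *m y) 0 0 + s * ((L j)^T *m z) 0 0.
  rewrite mulmxDr -scalemxAr mulmxBr !mxE.
  set a := \sum_j0 _; set b := \sum_j0 _; ring.
have ha := hy j; have hb := hz j.
rewrite /= in ha hb; nra.
Qed.
End Fin.

Theorem theorem1 (R : realType) (n q : nat)
  (f g : 'cV[R]_n.+1 -> R)
  (L : 'I_q -> 'cV[R]_n.+1) (ell : 'I_q -> R)
  (K : 'cV[R]_n.+1) (Q P : 'M[R]_n.+1) (wbar : R) :
  C1 f -> C1 g -> f 0 = 0 -> (forall x, g x != 0) ->
  compact (polytope L ell) -> interior (polytope L ell) 0 ->
  hurwitz (A0 n - en n *m K^T) ->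
  posdef Q -> posdef P ->
  (A0 n - en n *m K^T)^T *m P + P *m (A0 n - en n *m K^T) = - Q ->
  (forall P' : 'M[R]_n.+1,
     (A0 n - en n *m K^T)^T *m P' + P' *m (A0 n - en n *m K^T) = - Q -> P' = P) ->
  0 <= wbar ->
  exists alpha0 beta0 : R, 0 <= alpha0 /\ 0 <= beta0 /\
  forall alpha beta : R, alpha0 <= alpha -> beta0 <= beta ->
  forall (N : nat) (T tl : R), 0 < T -> 0 <= tl ->
  forall xd : R -> 'cV[R]_n.+1,
    dyn_admissible f g tl (tl + N%:R * T) xd ->
    (forall t, t \in `[tl, tl + N%:R * T] ->
       Omega P Q xd t wbar `<=` polytope L ell) ->
  forall xb : nat -> 'cV[R]_n.+1,
    (forall k, (k < N)%N -> polytope L ell (xb k)) ->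
  forall k : nat, (k < N)%N ->
  forall t : R, tl + k%:R * T <= t < tl + k.+1%:R * T ->
  forall x : 'cV[R]_n.+1, Omega P Q xd t wbar x ->
    `|kfbl f g K xd x t|
      <= 2^-1 * quad (Mab alpha beta) (sigma f xd (xb k) t)
         + ((Nab g K (ebar P Q wbar) alpha beta (xb k))^T *m sigma f xd (xb k) t) 0 0
         + Gammaab g K (ebar P Q wbar) alpha beta (xb k).
Proof.
move=> hf hg f0 gnz cX int0 _ _ posP _ _ w0.
set X := polytope L ell.
have X0x : X 0 by exact: (interior_subset int0).
have X0 : X !=set0 by exists 0.
have conv : forall y z (s : R), X y -> X z -> 0 <= s <= 1 -> X (y + s *: (z - y)).
  by move=> y z s; exact: polytope_convex.
have [Lf [Lf0 hLf]] := lipschitz f X hf cX X0 conv.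
have [Lg [Lg0 hLg]] := lipschitz g X hg cX X0 conv.
have [Bg [Bg0 hBg]] : exists Bg : R, 0 <= Bg /\ forall x, X x -> `|(g x)^-1| <= Bg.
  have cont : {within X, continuous (fun x => `|(g x)^-1|)}.
    apply: continuous_subspaceT => x.
    apply: (continuous_comp (f := fun x => (g x)^-1) (g := Num.norm)); last exact: norm_continuous.
    apply: continuousV; first exact: gnz.
    apply: differentiable_continuous; case: hg => hd _; exact: hd.
  have [c Xc cmax] := compact_EVT_max X0 cX cont.
  exists `|(g c)^-1|; split; first exact: normr_ge0.
  by move=> x Xx; apply: cmax; rewrite inE.
have hinv : forall y z, X y -> X z ->
    `|(g z)^-1 - (g y)^-1| <= Bg ^+ 2 * Lg * norm2 (z - y).
  move=> y z Xy Xz.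
  have gz := gnz z; have gy := gnz y.
  have -> : (g z)^-1 - (g y)^-1 = - (g z - g y) * ((g z)^-1 * (g y)^-1).
    by field; rewrite gz gy.
  rewrite normrM normrN normrM.
  have h1 := hLg y z Xy Xz; have h2 := hBg z Xz; have h3 := hBg y Xy.
  apply: le_trans (ler_pM _ _ h1 (ler_pM _ _ h2 h3)) _; rewrite ?normr_ge0 ?mulr_ge0 //.
  by rewrite le_eqVlt; apply/orP; left; apply/eqP; ring.
have [lm0 hlm] := lmin_prop _ _ posP.
exists Lf, (Bg ^+ 2 * Lg + 1).
split => //; split; first by rewrite addr_ge0 // mulr_ge0 // sqr_ge0.
move=> al be hal hbe N T tl T0 tl0 xd _ hOm xb hxb k kN t /andP [t1 t2] x hx.
set e := ebar P Q wbar.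
set xk := xb k.
set s1 := norm2 (xd t - xk).
set s2 := `|xd_dot_n xd t - f xk|.
set G := `|(g xk)^-1|.
have Xk : X xk by exact: hxb.
have tin : t \in `[tl, tl + N%:R * T].
  rewrite in_itv /=; apply/andP; split.
    by apply: le_trans t1; rewrite lerDl mulr_ge0 // ltW.
  apply: (le_trans (ltW t2)); rewrite lerD2l; apply: ler_wpM2r; [exact: ltW | by rewrite ler_nat].
have Xx : X x := hOm t tin x hx.
have e0 : 0 <= e by exact: sqrtr_ge0.
have s10 : 0 <= s1 by exact: norm2_ge0.
have s20 : 0 <= s2 by exact: normr_ge0.
have G0 : 0 <= G by exact: normr_ge0.
have nK0 := norm2_ge0 K.
have d_le : norm2 (x - xd t) <= e.
  have hq : lmin P * norm2 (x - xd t) ^+ 2 <= gamma P Q * wbar ^+ 2.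
    rewrite norm2_sq; apply: le_trans (hlm _) _; exact: hx.
  have hq' : norm2 (x - xd t) ^+ 2 <= gamma P Q * wbar ^+ 2 / lmin P.
    by rewrite ler_pdivlMr // mulrC.
  rewrite /e /ebar -(ger0_norm (norm2_ge0 (x - xd t))) -sqrtr_sqr.
  exact: ler_wsqrtr.
have dxb : norm2 (x - xk) <= e + s1.
  have -> : x - xk = (x - xd t) + (xd t - xk) by rewrite addrA subrK.
  apply: le_trans (norm2_triangle _ _) _; exact: lerD.
have nx0 := norm2_ge0 (x - xk).
have hginv : `|(g x)^-1| <= G + be * (e + s1).
  have h1 := hinv xk x Xk Xx.
  have tri : `|(g x)^-1| <= G + `|(g x)^-1 - (g xk)^-1|.
    rewrite /G; apply: le_trans (ler_normD _ _); rewrite addrC subrK lexx //.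
  apply: le_trans tri _; rewrite lerD2l.
  apply: le_trans h1 _; apply: ler_pM => //; first by rewrite mulr_ge0 // sqr_ge0.
  lra.
have hfx : `|f x - f xk| <= al * (e + s1).
  apply: le_trans (hLf xk x Xk Xx) _; apply: ler_pM => //; lra.
have hK : `|(K^T *m (x - xd t)) 0 0| <= norm2 K * e.
  apply: le_trans (dot_norm2 _ _) _; exact: ler_wpM2l.
have hin : `|- (f x - xd_dot_n xd t) - (K^T *m (x - xd t)) 0 0| <=
    al * (e + s1) + s2 + norm2 K * e.
  set D := xd_dot_n xd t; set kv := (K^T *m (x - xd t)) 0 0.
  have -> : - (f x - D) - kv = - ((f x - f xk) + (f xk - D) + kv) by ring.
  rewrite normrN; apply: le_trans (ler_normD _ _) _; apply: lerD => //.
  apply: le_trans (ler_normD _ _) _; apply: lerD => //.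
  by rewrite /s2 distrC.
have hk : `|kfbl f g K xd x t| <=
    (G + be * (e + s1)) * (al * (e + s1) + s2 + norm2 K * e).
  rewrite /kfbl normrM; apply: ler_pM => //; exact: normr_ge0.
have BL0 : 0 <= Bg ^+ 2 * Lg by rewrite mulr_ge0 // sqr_ge0.
have be0 : 0 < be by lra.
have hM := quad_Mab al be s1 s2 be0.
rewrite /sigma -/xk -/s1 -/s2 vec2_dot /Nab /Gammaab -/G.
rewrite -/e in hM hk *.
nra.
Qed.
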